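(* Let $\mathcal{X}_k \in \{\mathcal{E}_k, \mathcal{F}_k\}$ for $1 \leq k \leq n$. For any $\lambda \in R$ and $1< i,j \leq n$, \[1 + \lambda \mathcal{X}_i\mathcal{X}_j = [1+ \lambda \mathcal{X}_i\mathcal{X}_1,\ 1 + \mathcal{X}_1\mathcal{X}_j].\]
   Context: Let $R$ be a commutative ring. For $v=(a_1,\dots,a_n), w=(b_1,\dots,b_n)\in R^n$ the Suslin matrix $\mathcal{S}_{n-1}(v,w)$ is defined recursively: $\mathcal{S}_1(v,w)=\begin{pmatrix} a_1 & a_2\\ -b_2 & b_1\end{pmatrix}$, $\overline{\mathcal{S}_1(v,w)}=\begin{pmatrix} b_1 & -a_2\\ b_2 & a_1\end{pmatrix}$, and with $v=(a_1,v')$, $w=(b_1,w')$, $\mathcal{S}_{n-1}(v,w)=\begin{pmatrix} a_1 & \mathcal{S}_{n-2}(v',w')\\ -\overline{\mathcal{S}_{n-2}(v',w')} & b_1\end{pmatrix}$, $\overline{\mathcal{S}_{n-1}(v,w)}=\begin{pmatrix} b_1 & -\mathcal{S}_{n-2}(v',w')\\ \overline{\mathcal{S}_{n-2}(v',w')} & a_1\end{pmatrix}$. Set $\mathcal{E}_i = \mathcal{S}_{n-1}(e_i,0)$, $\mathcal{F}_i = \mathcal{S}_{n-1}(0,f_i)$ for standard basis vectors $e_i$, $f_i$. The commutator is $[a,b]=aba^{-1}b^{-1}$. *)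

(* Defs.v *)
From HB Require Import structures.
From mathcomp Require Import all_boot all_order all_algebra.
Set Implicit Arguments. Unset Strict Implicit. Unset Printing Implicit Defensive.
Import GRing.Theory.
Local Open Scope ring_scope.

(* Size of the Suslin matrix S_m : dsz m = 2^m, defined so that block matrices
   of size dsz m + dsz m are convertibly of size dsz m.+1. *)
Fixpoint dsz (m : nat) : nat := if m is m'.+1 then (dsz m' + dsz m')%N else 1%N.

Lemma dszE m : dsz m = (2 ^ m)%N.
Proof. elim: m => //= m ->; by rewrite expnS mul2n addnn. Qed.

(* suslin_pair m v w = (S_m(v,w), bar S_m(v,w)) where v w : nat -> R are
   0-indexed coordinate functions (v 0 = a_1, v 1 = a_2, ...), using the
   coordinates 0..m.  Base case m = 0: S_0(a,b) = a, bar S_0(a,b) = b (1x1);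
   for m = 1 this reproduces exactly the paper's S_1 and bar S_1. *)
Fixpoint suslin_pair (R : comNzRingType) (m : nat) (v w : nat -> R)
  : 'M[R]_(dsz m) * 'M[R]_(dsz m) :=
  match m return 'M[R]_(dsz m) * 'M[R]_(dsz m) with
  | 0 => ((v 0%N)%:M, (w 0%N)%:M)
  | m'.+1 =>
      let p := suslin_pair m' (fun k => v k.+1) (fun k => w k.+1) in
      (block_mx (v 0%N)%:M p.1 (- p.2) (w 0%N)%:M,
       block_mx (w 0%N)%:M (- p.1) p.2 (v 0%N)%:M)
  end.

Definition coord_fun (R : comNzRingType) (n : nat) (v : 'rV[R]_n) (k : nat) : R :=
  match insub k with Some i => v 0 i | None => 0 end.

Definition suslin (R : comNzRingType) (n : nat) (v w : 'rV[R]_n) : 'M[R]_(dsz n.-1) :=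
  (suslin_pair n.-1 (coord_fun v) (coord_fun w)).1.

(* standard basis vector e_i of R^n, 1-based index i *)
Definition std_vec (R : comNzRingType) (n i : nat) : 'rV[R]_n :=
  \row_(k < n) (((k : nat) == i.-1)%:R).

Definition suslinE (R : comNzRingType) (n i : nat) : 'M[R]_(dsz n.-1) :=
  suslin (std_vec R n i) 0.
Definition suslinF (R : comNzRingType) (n i : nat) : 'M[R]_(dsz n.-1) :=
  suslin 0 (std_vec R n i).

Definition mxcomm (R : comUnitRingType) (k : nat) (a b : 'M[R]_k) : 'M[R]_k :=
  a *m b *m invmx a *m invmx b.

(* Main.v *)
Require Import Defs.
From mathcomp Require Import all_boot all_order all_algebra.
Import GRing.Theory.
Local Open Scope ring_scope.

Lemma inv_of (T : unitRingType) (a b : T) : a * b = 1 -> b * a = 1 -> a^-1 = b.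
Proof.
move=> h1 h2; have U : a \is a GRing.unit by apply/unitrP; exists b.
by rewrite -[LHS]mulr1 -h1 mulrA mulVr // mul1r.
Qed.

Lemma abstract_comm (T : unitRingType) (e x y : T) :
  e * e = e -> e * x + x * e = x -> e * y + y * e = y ->
  x * y + y * x = 0 -> x * x = 0 -> y * y = 0 ->
  1 + x * y = (1 + x * e) * (1 + e * y) * (1 + x * e)^-1 * (1 + e * y)^-1.
Proof.
move=> ee hx hy hxy xx yy.
have exe : e * x * e = 0.
  have := congr1 (fun z => e * z) hx; rewrite /= mulrDr mulrA ee mulrA => h.
  by apply: (@addrI _ (e * x)); rewrite addr0.
have eye : e * y * e = 0.
  have := congr1 (fun z => e * z) hy; rewrite /= mulrDr mulrA ee mulrA => h.
  by apply: (@addrI _ (e * y)); rewrite addr0.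
have xe : x * e = x - e * x by apply/eqP; rewrite eq_sym subr_eq addrC hx.
have ye : y * e = y - e * y by apply/eqP; rewrite eq_sym subr_eq addrC hy.
have yx : y * x = - (x * y) by apply/eqP; rewrite -subr_eq0 opprK addrC hxy.
have A2 : (x * e) * (x * e) = 0 by rewrite mulrA -(mulrA x e x) -mulrA exe mulr0.
have B2 : (e * y) * (e * y) = 0 by rewrite mulrA eye mul0r.
rewrite (@inv_of _ _ (1 - x * e)); last 2 first.
- by rewrite mulrBr mulr1 mulrDl mul1r A2 addr0 addrK.
- by rewrite mulrDr mulr1 mulrBl mul1r A2 subr0 subrK.
rewrite (@inv_of _ _ (1 - e * y)); last 2 first.
- by rewrite mulrBr mulr1 mulrDl mul1r B2 addr0 addrK.
- by rewrite mulrDr mulr1 mulrBl mul1r B2 subr0 subrK.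
set A := x * e; set B := e * y.
have AB : A * B = x * e * y by rewrite /A /B -mulrA (mulrA e) ee mulrA.
have xex : x * e * x = 0 by rewrite xe mulrBl xx -mulrA xx mulr0 subr0.
have yey : y * e * y = 0 by rewrite ye mulrBl yy -mulrA yy mulr0 subr0.
have ABA : A * B * A = 0.
  rewrite /A /B !mulrA -(mulrA x e e) ee -(mulrA (x * e) y x) yx mulrN mulNr.
  by rewrite mulrA xex !mul0r oppr0.
have ex : e * x = x - x * e by apply/eqP; rewrite eq_sym subr_eq hx.
have ey : e * y = y - y * e by apply/eqP; rewrite eq_sym subr_eq hy.
have BA : B * A = - (x * y * e).
  rewrite /B /A !mulrA -(mulrA e y x) yx mulrN mulNr mulrA ex mulrBl mulrBl.
  by rewrite -(mulrA x e y) -(mulrA x (e * y) e) eye mulr0 subr0.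
have AB2 : A * B = x * y + B * A.
  by rewrite AB BA -(mulrA x e y) ey mulrBr mulrA.
have xyB : x * y * B = 0 by rewrite /B mulrA -(mulrA x y e) -(mulrA x (y * e) y) yey mulr0.
have s1 : (1 + A) * (1 + B) * (1 - A) = 1 + B + x * y.
  rewrite mulrBr mulr1 !mulrDl !mul1r !mulrDr !mulr1 !mulrDl ABA A2 addr0 AB2.
  rewrite mul1r addr0 (addrC (x * y)) (addrA A (B * A) (x * y)) (addrA (1 + B) (A + B * A) (x * y)).
  by rewrite (addrAC _ (x * y)) addrK.
have s2 : (1 + B + x * y) * (1 - B) = 1 + x * y.
  by rewrite mulrBr mulr1 !mulrDl mul1r B2 xyB !addr0 addrAC addrK.
by rewrite s1 s2.
Qed.
Section S.
Variable R : comNzRingType.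
Local Notation sp := (@suslin_pair R).

Lemma sp_ext m (v w v' w' : nat -> R) :
  (forall t, v t = v' t) -> (forall t, w t = w' t) -> sp m v w = sp m v' w'.
Proof.
elim: m v w v' w' => [|m IH] v w v' w' hv hw /=; first by rewrite hv hw.
by rewrite (IH _ _ (fun k => v' k.+1) (fun k => w' k.+1)) // hv hw.
Qed.

Lemma sp_zero m (v w : nat -> R) :
  (forall t, v t = 0) -> (forall t, w t = 0) -> sp m v w = (0, 0).
Proof.
elim: m v w => [|m IH] v w hv hw /=; first by rewrite hv hw raddf0.
rewrite IH // hv hw raddf0 oppr0 block_mx0.
by rewrite -[0 : 'M_(dsz m + dsz m)]block_mx0.
Qed.

Lemma sp_self m (v w : nat -> R) :
  (forall t, v t * w t = 0) ->
  (sp m v w).1 *m (sp m v w).2 = 0 /\ (sp m v w).2 *m (sp m v w).1 = 0.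
Proof.
elim: m v w => [|m IH] v w h /=.
  by split; rewrite -scalar_mxM; [rewrite h | rewrite mulrC h]; exact: raddf0.
have [h1 h2] := IH (fun k => v k.+1) (fun k => w k.+1) (fun t => h t.+1).
rewrite !mulmx_block !mulmxN !mulNmx h1 h2 -!scalar_mxM !mul_scalar_mx !mul_mx_scalar.
rewrite [w 0%N * _]mulrC h raddf0 !oppr0 ?addr0 ?add0r ?addNr ?subrr.
by split; exact: block_mx0.
Qed.

Lemma zl1 (V : zmodType) (X Y : V) : (- X + Y) + (- Y + X) = 0.
Proof. by rewrite addrACA -opprD (addrC Y) addNr. Qed.
Lemma zl2 (V : zmodType) (X Y : V) : (X - Y) + (Y - X) = 0.
Proof. by rewrite addrACA -opprD (addrC Y) addrN. Qed.
Lemma scalD n (a b : R) : (a + b)%:M = a%:M + b%:M :> 'M[R]_n.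
Proof. exact: raddfD. Qed.

Lemma sp_cross m (v w v' w' : nat -> R) :
  (forall t, v t * w' t + v' t * w t = 0) ->
  (sp m v w).1 *m (sp m v' w').2 + (sp m v' w').1 *m (sp m v w).2 = 0 /\
  (sp m v w).2 *m (sp m v' w').1 + (sp m v' w').2 *m (sp m v w).1 = 0.
Proof.
move=> h; have h' : forall t, w t * v' t + w' t * v t = 0.
  by move=> t; rewrite mulrC (mulrC (w' t)) addrC h.
elim: m v w v' w' h h' => [|m IH] v w v' w' h h' /=.
  by rewrite -!scalar_mxM -!scalD h h' raddf0.
have [h1 h2] := IH (fun k => v k.+1) (fun k => w k.+1) (fun k => v' k.+1) (fun k => w' k.+1) (fun t => h t.+1) (fun t => h' t.+1).
rewrite !mulmx_block !add_block_mx !mulmxN !mulNmx -!scalar_mxM !mul_scalar_mx !mul_mx_scalar.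
rewrite !opprK !zl1 !zl2; split.
  rewrite addrACA -scalD h raddf0 h1 add0r addrACA h2 -scalD h' raddf0 addr0.
  exact: block_mx0.
rewrite addrACA -scalD h' raddf0 h1 add0r addrACA h2 -scalD h raddf0 addr0.
exact: block_mx0.
Qed.

Lemma Xform m (v w : nat -> R) : v 0%N = 0 -> w 0%N = 0 ->
  (sp m.+1 v w).1 = block_mx 0 (sp m (fun k => v k.+1) (fun k => w k.+1)).1
                               (- (sp m (fun k => v k.+1) (fun k => w k.+1)).2) 0.
Proof. by move=> hv hw /=; rewrite hv hw raddf0. Qed.

Lemma rel_sq m (v w : nat -> R) : v 0%N = 0 -> w 0%N = 0 ->
  (forall t, v t * w t = 0) -> (sp m.+1 v w).1 *m (sp m.+1 v w).1 = 0.
Proof.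
move=> hv hw h; rewrite Xform //.
have [h1 h2] := @sp_self m _ _ (fun t => h t.+1).
rewrite mulmx_block !mulmxN !mulNmx h1 h2 !mulmx0 !mul0mx !addr0 !add0r oppr0.
rewrite addr0; exact: block_mx0.
Qed.

Lemma rel_anti m (v w v' w' : nat -> R) : v 0%N = 0 -> w 0%N = 0 ->
  v' 0%N = 0 -> w' 0%N = 0 ->
  (forall t, v t * w' t + v' t * w t = 0) ->
  (sp m.+1 v w).1 *m (sp m.+1 v' w').1 + (sp m.+1 v' w').1 *m (sp m.+1 v w).1 = 0.
Proof.
move=> hv hw hv' hw' h; rewrite !Xform //.
have [h1 h2] := @sp_cross m _ _ _ _ (fun t => h t.+1).
rewrite !mulmx_block !mulmxN !mulNmx !mulmx0 !mul0mx !addr0 !add0r add_block_mx.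
rewrite -!opprD h1 h2 !oppr0 addr0.
by rewrite addr0 oppr0; exact: block_mx0.
Qed.

Lemma rel_e m (v w : nat -> R) (a b : R) : v 0%N = 0 -> w 0%N = 0 -> a + b = 1 ->
  block_mx a%:M 0 0 b%:M *m (sp m.+1 v w).1 + (sp m.+1 v w).1 *m block_mx a%:M 0 0 b%:M
  = (sp m.+1 v w).1.
Proof.
move=> hv hw hab; rewrite !Xform //.
rewrite !mulmx_block add_block_mx !mulmx0 !mul0mx !addr0 !add0r !mul_scalar_mx !mul_mx_scalar.
by rewrite -!scalerDl [b + a]addrC hab !scale1r.
Qed.

Lemma e_idem m (a b : R) : a * a = a -> b * b = b ->
  block_mx a%:M 0 0 b%:M *m block_mx a%:M 0 0 b%:M = block_mx a%:M 0 0 b%:M :> 'M_(dsz m.+1).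
Proof.
move=> ha hb; rewrite mulmx_block !mulmx0 !mul0mx !addr0 !add0r -!scalar_mxM ha hb.
done.
Qed.
End S.
Lemma mx_comm (R : comUnitRingType) N (e x y : 'M[R]_N) :
  e *m e = e -> e *m x + x *m e = x -> e *m y + y *m e = y ->
  x *m y + y *m x = 0 -> x *m x = 0 -> y *m y = 0 ->
  1%:M + x *m y = mxcomm (1%:M + x *m e) (1%:M + e *m y).
Proof.
case: N e x y => [|N] e x y.
  by move=> *; rewrite [LHS]flatmx0 [RHS]flatmx0.
rewrite /mxcomm !mulmxE !idmxE; exact: abstract_comm.
Qed.

Lemma coord_std (R : comNzRingType) n i t :
  coord_fun (std_vec R n i) t = ((t < n)%N && (t == i.-1))%:R.
Proof.
rewrite /coord_fun; case: insubP => [u ht hu|ht]; rewrite ?mxE.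
  by rewrite ht -hu.
by rewrite (negbTE ht).
Qed.

Lemma coord0 (R : comNzRingType) n t : coord_fun (0 : 'rV[R]_n) t = 0.
Proof. by rewrite /coord_fun; case: insubP => [u _ _|_]; rewrite ?mxE. Qed.

Theorem theorem2p3 (R : comUnitRingType) (n : nat) (c : nat -> bool)
  (lambda : R) (i j : nat) :
  (1 < i <= n)%N -> (1 < j <= n)%N ->
  let X := fun k => if c k then suslinE R n k else suslinF R n k in
  1%:M + lambda *: (X i *m X j)
  = mxcomm (1%:M + lambda *: (X i *m X 1%N)) (1%:M + X 1%N *m X j).
Proof.
move=> /andP[hi hin] /andP[hj hjn].
case: n hin hjn => [|[|N]] hin hjn X.
- by have := leq_trans hi hin.
- by have := leq_trans hi hin.
pose V k t : R := (c k && (t < N.+2)%N && (t == k.-1))%:R.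
pose W k t : R := (~~ c k && (t < N.+2)%N && (t == k.-1))%:R.
have XE : forall k, X k = (suslin_pair N.+1 (V k) (W k)).1.
  move=> k; rewrite /X /suslinE /suslinF /suslin; case ck: (c k); rewrite (@sp_ext _ N.+1 _ _ (V k) (W k)) // => t;
  by rewrite ?coord_std ?coord0 /V /W ck.
have V0 : forall k, (1 < k)%N -> V k 0%N = 0.
  by move=> k hk; rewrite /V; case: k hk => [|[|k]] //= _; rewrite andbF.
have W0 : forall k, (1 < k)%N -> W k 0%N = 0.
  by move=> k hk; rewrite /W; case: k hk => [|[|k]] //= _; rewrite andbF.
have VW : forall k l t, (1 < k)%N -> (1 < l)%N -> V k t * W l t = 0.
  move=> k l t hk hl; rewrite /V /W -natrM mulnb.
  have [->|ne1] := eqVneq t k.-1; last by rewrite !andbF.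
  have [e|ne2] := eqVneq k.-1 l.-1; last by rewrite !andbF.
  have el : k = l by rewrite -(prednK (ltnW hk)) e prednK // ltnW.
  by rewrite -el; case: (c k); rewrite ?andbF.
have X1E : (suslin_pair N.+1 (V 1%N) (W 1%N)).1 =
    block_mx (c 1%N)%:R%:M 0 0 (~~ c 1%N)%:R%:M.
  rewrite /= sp_zero ?oppr0 /V /W ?andbT //= => t; by rewrite andbF.
have Xsq : forall k, (1 < k)%N -> X k *m X k = 0.
  by move=> k hk; rewrite XE rel_sq ?V0 ?W0 // => t; apply: VW.
have Xanti : X i *m X j + X j *m X i = 0.
  by rewrite !XE rel_anti ?V0 ?W0 // => t; rewrite !VW ?addr0.
have Xe : forall k, (1 < k)%N -> X 1%N *m X k + X k *m X 1%N = X k.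
  move=> k hk; rewrite !XE X1E rel_e ?V0 ?W0 //.
  by case: (c 1%N); rewrite /= ?addr0 ?add0r.
have ee : X 1%N *m X 1%N = X 1%N.
  by rewrite XE X1E e_idem //; case: (c 1%N); rewrite /= ?mulr1 ?mulr0.
rewrite !scalemxAl; apply: mx_comm => //.
- by rewrite -scalemxAr -scalemxAl -scalerDr Xe.
- exact: Xe.
- by rewrite -scalemxAl -scalemxAr -scalerDr Xanti scaler0.
- by rewrite -scalemxAl -scalemxAr Xsq // !scaler0.
- exact: Xsq.
Qed.
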